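(* Let $m,\hbar>0$, $0<E<U_0$, $l>0$, and let $U:\mathbb{R}\to\mathbb{R}$ be piecewise continuous with $U(x)=0$ for $x<0$ and $U(x)=U_0$ for $x>l$. Let $\theta\in(-\pi/2,\pi/2)$, $\kappa=\sqrt{2mE}/\hbar$, $a=\kappa\sin\theta$, $k=\kappa\cos\theta$, $\lambda=\sqrt{a^2+\kappa^2}$, $K_U^2=\frac{2m}{\hbar^2}(U_0-E)$, and assume $K_U^2>a^2$; set $k_U=\sqrt{K_U^2-a^2}>0$, $\lambda_U=\sqrt{a^2+K_U^2}$. Consider $\partial_x\tilde\Psi=A(x)\tilde\Psi$ with $A(x)$ as below and $\tilde U=\frac{2m}{\hbar^2}(U-E)$. On $x<0$ let $\psi_R=e^{ikx}v_R$, $\psi_L=e^{-ikx}v_L$ with $v_R=(a+ik,-\kappa^2,-(a-ik),-\kappa^2)^t$, $v_L=\overline{v_R}$, and $\psi_+=e^{\lambda x}w_+$ with $w_+$ a nonzero eigenvector of the constant matrix $A|_{x<0}$ for the eigenvalue $\lambda$. On $x>l$ let $\phi_R=e^{ik_Ux}v_R'$, $\phi_L=e^{-ik_Ux}v_L'$ with $v_R'=(a+ik_U,-K_U^2,a-ik_U,K_U^2)^t$, $v_L'=\overline{v_R'}$, and $\phi_-=e^{-\lambda_Ux}w_-'$ with $w_-'$ a nonzero eigenvector of $A|_{x>l}$ for the eigenvalue $-\lambda_U$. Let $S$ be the space of solutions which equal $a_1\psi_R+a_2\psi_L+a_3\psi_+$ on $x<0$ and $a_4\phi_R+a_5\phi_L+a_6\phi_-$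 on $x>l$ for some constants $a_j\in\mathbb{C}$. Assume that the maps $S\to\mathbb{C}^2$, $\Psi\mapsto(a_1,a_2)$ and $\Psi\mapsto(a_4,a_5)$ are both linear bijections, and let $A_{n\text{-}p}$ be the $2\times2$ matrix with $(a_1,a_2)^t=A_{n\text{-}p}(a_4,a_5)^t$ for all elements of $S$. Then $$\det A_{n\text{-}p}=\frac{k_U\,(E-U_0)}{k\,E}.$$
   Context: Here $A(x)=\begin{pmatrix} a&1&0&0\\0&a&\tilde U(x)&0\\0&0&-a&1\\ \tilde U(x)&0&0&-a\end{pmatrix}$ is the bilayer graphene transfer equation; $\psi_R,\psi_L,\psi_+$ solve it on $x<0$ (where $\tilde U=-\kappa^2$) and $\phi_R,\phi_L,\phi_-$ solve it on $x>l$ (where $\tilde U=K_U^2$). $A_{n\text{-}p}$ is the transmission matrix of the n-p junction between the propagating-wave coefficients on the two sides. *)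

(* Defs.v *)
From Stdlib Require Export Reals List.
Open Scope R_scope.

Definition Cx : Type := (R * R)%type.
Definition RtoC (r : R) : Cx := (r, 0).
Definition Cadd (z w : Cx) : Cx := (fst z + fst w, snd z + snd w).
Definition Cmul (z w : Cx) : Cx :=
  (fst z * fst w - snd z * snd w, fst z * snd w + snd z * fst w).
Definition Csub (z w : Cx) : Cx := (fst z - fst w, snd z - snd w).
Definition Cconj (z : Cx) : Cx := (fst z, - snd z).
Definition Cexp (z : Cx) : Cx := (exp (fst z) * cos (snd z), exp (fst z) * sin (snd z)).

Record C4 := mkC4 { v0 : Cx; v1 : Cx; v2 : Cx; v3 : Cx }.
Definition C4zero : C4 := mkC4 (RtoC 0) (RtoC 0) (RtoC 0) (RtoC 0).
Definition C4add (v w : C4) : C4 :=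
  mkC4 (Cadd (v0 v) (v0 w)) (Cadd (v1 v) (v1 w)) (Cadd (v2 v) (v2 w)) (Cadd (v3 v) (v3 w)).
Definition C4scale (c : Cx) (v : C4) : C4 :=
  mkC4 (Cmul c (v0 v)) (Cmul c (v1 v)) (Cmul c (v2 v)) (Cmul c (v3 v)).
Definition C4conj (v : C4) : C4 :=
  mkC4 (Cconj (v0 v)) (Cconj (v1 v)) (Cconj (v2 v)) (Cconj (v3 v)).
Definition proj (j : nat) (v : C4) : Cx :=
  match j with 0 => v0 v | 1 => v1 v | 2 => v2 v | _ => v3 v end.

(* A v, where A = [[a,1,0,0],[0,a,u,0],[0,0,-a,1],[u,0,0,-a]] and u = Utilde(x) *)
Definition Amul (a u : R) (v : C4) : C4 :=
  mkC4 (Cadd (Cmul (RtoC a) (v0 v)) (v1 v))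
       (Cadd (Cmul (RtoC a) (v1 v)) (Cmul (RtoC u) (v2 v)))
       (Cadd (Cmul (RtoC (- a)) (v2 v)) (v3 v))
       (Cadd (Cmul (RtoC u) (v0 v)) (Cmul (RtoC (- a)) (v3 v))).

Definition C4_continuous_at (Psi : R -> C4) (x : R) : Prop :=
  forall j, continuity_pt (fun t => fst (proj j (Psi t))) x /\
            continuity_pt (fun t => snd (proj j (Psi t))) x.

Definition C4_deriv_at (Psi : R -> C4) (x : R) (d : C4) : Prop :=
  forall j, derivable_pt_lim (fun t => fst (proj j (Psi t))) x (fst (proj j d)) /\
            derivable_pt_lim (fun t => snd (proj j (Psi t))) x (snd (proj j d)).

Definition is_solution (a : R) (Ut : R -> R) (Psi : R -> C4) : Prop :=
  (forall x, C4_continuous_at Psi x) /\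
  (forall x, continuity_pt Ut x -> C4_deriv_at Psi x (Amul a (Ut x) (Psi x))).

Definition piecewise_continuous (U : R -> R) : Prop :=
  (forall lo hi : R, exists pts : list R,
      forall x, lo <= x <= hi -> ~ In x pts -> continuity_pt U x) /\
  (forall x : R,
      (exists L, forall eps, eps > 0 -> exists d, d > 0 /\
          forall y, x < y < x + d -> Rabs (U y - L) < eps) /\
      (exists L, forall eps, eps > 0 -> exists d, d > 0 /\
          forall y, x - d < y < x -> Rabs (U y - L) < eps)).

Definition comb3 (c1 : Cx) (f1 : R -> C4) (c2 : Cx) (f2 : R -> C4) (c3 : Cx) (f3 : R -> C4)
  (x : R) : C4 :=
  C4add (C4scale c1 (f1 x)) (C4add (C4scale c2 (f2 x)) (C4scale c3 (f3 x))).

Record Mat2 := mkMat2 { m11 : Cx; m12 : Cx; m21 : Cx; m22 : Cx }.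
Definition Mat2_det (M : Mat2) : Cx := Csub (Cmul (m11 M) (m22 M)) (Cmul (m12 M) (m21 M)).

(* Main.v *)
Require Import Defs.
From Stdlib Require Import Reals List Lra.
From Coquelicot Require Complex.
Open Scope R_scope.

Definition Bc (v w : C4) : Cx :=
  Csub (Csub (Cmul (v0 v) (v3 w)) (Cmul (v3 v) (v0 w)))
       (Csub (Cmul (v1 v) (v2 w)) (Cmul (v2 v) (v1 w))).

Ltac dC4 v := let a := fresh in let b := fresh in let c := fresh in let d := fresh in
  let e := fresh in let f := fresh in let g := fresh in let h := fresh in
  destruct v as [[a b] [c d] [e f] [g h]].
Ltac dCx z := let a := fresh in let b := fresh in destruct z as [a b].
Ltac cxring := unfold Bc, Csub, Cmul, Cadd, C4add, C4scale, Amul, RtoC, Cconj, C4conj in *; simpl;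
  f_equal; ring.

Lemma Bc_addl u v w : Bc (C4add u v) w = Cadd (Bc u w) (Bc v w).
Proof. dC4 u; dC4 v; dC4 w; cxring. Qed.
Lemma Bc_addr u v w : Bc w (C4add u v) = Cadd (Bc w u) (Bc w v).
Proof. dC4 u; dC4 v; dC4 w; cxring. Qed.
Lemma Bc_scalel c u w : Bc (C4scale c u) w = Cmul c (Bc u w).
Proof. dCx c; dC4 u; dC4 w; cxring. Qed.
Lemma Bc_scaler c u w : Bc w (C4scale c u) = Cmul c (Bc w u).
Proof. dCx c; dC4 u; dC4 w; cxring. Qed.
Lemma Bc_self u : Bc u u = (0,0).
Proof. dC4 u; cxring. Qed.
Lemma Bc_anti u w : Bc u w = Csub (0,0) (Bc w u).
Proof. dC4 u; dC4 w; cxring. Qed.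
Lemma Bc_A a x v w : Cadd (Bc (Amul a x v) w) (Bc v (Amul a x w)) = (0,0).
Proof. dC4 v; dC4 w; cxring. Qed.

Module H.
Import Complex.
Lemma Cmul_cancel (z w : Cx) : Cmul z w = (0,0)%R -> z <> (0,0)%R -> w = (0,0)%R.
Proof. intros H Hz. change (Complex.Cmult z w = (0,0)%R) in H.
 change Cx with Complex.C in *.
 replace w with (Complex.Cmult (Complex.Cinv z) (Complex.Cmult z w)) by (field; auto).
 rewrite H. change (0,0)%R with (Complex.RtoC 0). ring. Qed.
End H.

Lemma Bc_eig a x v w mu nu : Amul a x v = C4scale mu v -> Amul a x w = C4scale nu w ->
  Cadd mu nu <> (0,0) -> Bc v w = (0,0).
Proof. intros Hv Hw Hn. pose proof (Bc_A a x v w) as E.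
 rewrite Hv, Hw, Bc_scalel, Bc_scaler in E.
 apply (H.Cmul_cancel (Cadd mu nu)); auto.
 rewrite <- E. generalize (Bc v w); intro z. dCx z; dCx mu; dCx nu; cxring. Qed.

Lemma const_pts (g : R -> R) (pts : list R) : forall lo hi, lo <= hi ->
  (forall x, lo <= x <= hi -> continuity_pt g x) ->
  (forall x, lo < x < hi -> ~ In x pts -> derivable_pt_lim g x 0) -> g lo = g hi.
Proof.
 induction pts as [|p rest IH]; intros lo hi Hle Hc Hd.
 - destruct (Req_dec lo hi) as [->|Hne]; [reflexivity|].
   assert (pr : forall x, lo < x < hi -> derivable_pt g x).
   { intros x Hx. exists 0. apply Hd; auto. }
   pose proof (null_derivative_loc g lo hi pr Hc) as K.
   assert (K2 : forall x (P : lo < x < hi), derive_pt g x (pr x P) = 0).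
   { intros x P. apply derive_pt_eq_0. apply Hd; auto. }
   specialize (K K2). unfold constant_D_eq in K. symmetry. apply K. lra.
 - destruct (Rlt_dec lo p) as [H1|H1]; [destruct (Rlt_dec p hi) as [H2|H2]|].
   + transitivity (g p).
     * apply IH; try lra. intros; apply Hc; lra.
       intros x Hx Hn. apply Hd. lra. intros [E|E]; [lra|tauto].
     * apply IH; try lra. intros; apply Hc; lra.
       intros x Hx Hn. apply Hd. lra. intros [E|E]; [lra|tauto].
   + apply IH; auto. intros x Hx Hn. apply Hd; auto. intros [E|E]; [lra|tauto].
   + apply IH; auto. intros x Hx Hn. apply Hd; auto. intros [E|E]; [lra|tauto].
Qed.

Lemma dlim_eq f x l l' : derivable_pt_lim f x l -> l = l' -> derivable_pt_lim f x l'.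
Proof. intros; subst; auto. Qed.

Lemma Bc_cont (Psi Phi : R -> C4) x : C4_continuous_at Psi x -> C4_continuous_at Phi x ->
  continuity_pt (fun t => fst (Bc (Psi t) (Phi t))) x /\
  continuity_pt (fun t => snd (Bc (Psi t) (Phi t))) x.
Proof.
 intros H1 H2.
 destruct (H1 0%nat); destruct (H1 1%nat); destruct (H1 2%nat); destruct (H1 3%nat);
 destruct (H2 0%nat); destruct (H2 1%nat); destruct (H2 2%nat); destruct (H2 3%nat).
 simpl in *. unfold Bc, Csub, Cmul; simpl.
 split; repeat (first [apply continuity_pt_minus | apply continuity_pt_plus
   | apply continuity_pt_mult | assumption]).
Qed.

Lemma Bc_der (Psi Phi : R -> C4) a u x :
  C4_deriv_at Psi x (Amul a u (Psi x)) -> C4_deriv_at Phi x (Amul a u (Phi x)) ->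
  derivable_pt_lim (fun t => fst (Bc (Psi t) (Phi t))) x 0 /\
  derivable_pt_lim (fun t => snd (Bc (Psi t) (Phi t))) x 0.
Proof.
 intros H1 H2.
 destruct (H1 0%nat); destruct (H1 1%nat); destruct (H1 2%nat); destruct (H1 3%nat);
 destruct (H2 0%nat); destruct (H2 1%nat); destruct (H2 2%nat); destruct (H2 3%nat).
 simpl in *. unfold Bc, Csub, Cmul; simpl.
 split; (eapply dlim_eq; [repeat (first [apply derivable_pt_lim_minus | apply derivable_pt_lim_plus
   | apply derivable_pt_lim_mult | eassumption]) | ]);
 unfold Amul, Cadd, Cmul, RtoC; simpl; ring.
Qed.

Module H2.
Import Complex.
Ltac toC := change Cmul with Complex.Cmult in *; change Csub with Complex.Cminus in *;
  change Cadd with Complex.Cplus in *; change Cx with Complex.C in *.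

Lemma cancel_r (x y z : Cx) : Cmul x z = Cmul y z -> z <> (0,0)%R -> x = y.
Proof. intros E Hz. toC.
 replace x with (Cmult (Cmult x z) (Cinv z)) by (field; auto).
 rewrite E. field; auto. Qed.

Lemma solve2 (BL BR a1 a2 a4 a5 c1 c2 d1 d2 : Cx) : BL <> (0,0)%R -> BR <> (0,0)%R ->
  Cmul (Csub (Cmul a1 c2) (Cmul a2 c1)) BL = Cmul (Csub (Cmul a4 (0,0)%R) (Cmul a5 (1,0)%R)) BR ->
  Cmul (Csub (Cmul a1 d2) (Cmul a2 d1)) BL = Cmul (Csub (Cmul a4 (1,0)%R) (Cmul a5 (0,0)%R)) BR ->
  Cmul (Csub (Cmul c1 d2) (Cmul c2 d1)) BL = Cmul (Csub (Cmul (1,0)%R (1,0)%R) (Cmul (0,0)%R (0,0)%R)) BR ->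
  a1 = Cadd (Cmul c1 a4) (Cmul d1 a5) /\ a2 = Cadd (Cmul c2 a4) (Cmul d2 a5).
Proof. intros HL HR E1 E2 E3. toC.
 change (0,0)%R with (RtoC 0) in *. change (1,0)%R with (RtoC 1) in *.
 assert (E3' : Cmult (Cminus (Cmult c1 d2) (Cmult c2 d1)) BL = BR) by (rewrite E3; ring).
 assert (HD : Cmult (Cminus (Cmult c1 d2) (Cmult c2 d1)) BL <> RtoC 0) by (rewrite E3'; auto).
 split; eapply cancel_r; try exact HD.
 - transitivity (Cminus (Cmult c1 (Cmult (Cminus (Cmult a1 d2) (Cmult a2 d1)) BL))
      (Cmult d1 (Cmult (Cminus (Cmult a1 c2) (Cmult a2 c1)) BL))); [toC; ring|].
   rewrite E1, E2. rewrite <- E3'. toC. ring.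
 - transitivity (Cminus (Cmult c2 (Cmult (Cminus (Cmult a1 d2) (Cmult a2 d1)) BL))
      (Cmult d2 (Cmult (Cminus (Cmult a1 c2) (Cmult a2 c1)) BL))); [toC; ring|].
   rewrite E1, E2. rewrite <- E3'. toC. ring.
Qed.
End H2.

Lemma Bc_comb a1 a2 a3 b1 b2 b3 r s p : Bc r p = (0,0) -> Bc s p = (0,0) ->
  Bc (C4add (C4scale a1 r) (C4add (C4scale a2 s) (C4scale a3 p)))
     (C4add (C4scale b1 r) (C4add (C4scale b2 s) (C4scale b3 p))) =
  Cmul (Csub (Cmul a1 b2) (Cmul a2 b1)) (Bc r s).
Proof. intros H1 H2.
 rewrite !Bc_addl, !Bc_addr, !Bc_scalel, !Bc_scaler.
 rewrite (Bc_anti s r), (Bc_anti p r), (Bc_anti p s), !Bc_self, H1, H2.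
 generalize (Bc r s); intro z. dCx z; dCx a1; dCx a2; dCx a3; dCx b1; dCx b2; dCx b3. cxring.
Qed.

Lemma Cexp_pair y z w : z = - y -> Cmul (Cexp (0, y)) (Cmul (Cexp (0, z)) w) = w.
Proof. intros ->. unfold Cexp; simpl. rewrite exp_0, cos_neg, sin_neg.
 pose proof (sin2_cos2 y) as S. unfold Rsqr in S. dCx w.
 unfold Cmul; simpl. f_equal.
 - transitivity ((sin y * sin y + cos y * cos y) * H); [ring | rewrite S; ring].
 - transitivity ((sin y * sin y + cos y * cos y) * H0); [ring | rewrite S; ring].
Qed.

Lemma conserve a (U Ut : R -> R) Psi Phi lo hi : piecewise_continuous U ->
  (forall x, continuity_pt U x -> continuity_pt Ut x) -> lo <= hi ->
  is_solution a Ut Psi -> is_solution a Ut Phi ->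
  Bc (Psi lo) (Phi lo) = Bc (Psi hi) (Phi hi).
Proof. intros [Hpc _] HU Hle [C1 D1] [C2 D2].
 destruct (Hpc lo hi) as [pts Hp].
 rewrite (surjective_pairing (Bc (Psi lo) (Phi lo))), (surjective_pairing (Bc (Psi hi) (Phi hi))).
 f_equal.
 - apply (const_pts (fun t => fst (Bc (Psi t) (Phi t))) pts); auto.
   intros; apply Bc_cont; auto.
   intros x Hx Hn. assert (Hc : continuity_pt Ut x) by (apply HU, Hp; [lra|auto]).
   apply (Bc_der Psi Phi a (Ut x)); auto.
 - apply (const_pts (fun t => snd (Bc (Psi t) (Phi t))) pts); auto.
   intros; apply Bc_cont; auto.
   intros x Hx Hn. assert (Hc : continuity_pt Ut x) by (apply HU, Hp; [lra|auto]).
   apply (Bc_der Psi Phi a (Ut x)); auto.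
Qed.
Theorem mainTheorem6 (m hbar E U0 l : R) (U : R -> R) (theta : R) (w_plus w_minus : C4) :
  0 < m -> 0 < hbar -> 0 < E -> E < U0 -> 0 < l ->
  piecewise_continuous U ->
  (forall x, x < 0 -> U x = 0) ->
  (forall x, l < x -> U x = U0) ->
  - (PI / 2) < theta < PI / 2 ->
  let kappa := sqrt (2 * m * E) / hbar in
  let a := kappa * sin theta in
  let k := kappa * cos theta in
  let lam := sqrt (a ^ 2 + kappa ^ 2) in
  let KU2 := 2 * m / hbar ^ 2 * (U0 - E) in
  KU2 > a ^ 2 ->
  let kU := sqrt (KU2 - a ^ 2) in
  let lamU := sqrt (a ^ 2 + KU2) in
  let Ut := fun x => 2 * m / hbar ^ 2 * (U x - E) in
  (* eigenvectors of A|_{x<0} (Utilde = -kappa^2) and A|_{x>l} (Utilde = K_U^2) *)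
  w_plus <> C4zero -> Amul a (- kappa ^ 2) w_plus = C4scale (RtoC lam) w_plus ->
  w_minus <> C4zero -> Amul a KU2 w_minus = C4scale (RtoC (- lamU)) w_minus ->
  let vR := mkC4 (a, k) (RtoC (- kappa ^ 2)) (- a, k) (RtoC (- kappa ^ 2)) in
  let vL := C4conj vR in
  let vR' := mkC4 (a, kU) (RtoC (- KU2)) (a, - kU) (RtoC KU2) in
  let vL' := C4conj vR' in
  let psiR := fun x => C4scale (Cexp (0, k * x)) vR in
  let psiL := fun x => C4scale (Cexp (0, - k * x)) vL in
  let psiP := fun x => C4scale (Cexp (lam * x, 0)) w_plus in
  let phiR := fun x => C4scale (Cexp (0, kU * x)) vR' in
  let phiL := fun x => C4scale (Cexp (0, - kU * x)) vL' in
  let phiM := fun x => C4scale (Cexp (- lamU * x, 0)) w_minus in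
  let coeffL := fun (Psi : R -> C4) (a1 a2 : Cx) =>
    exists a3 : Cx, forall x, x < 0 -> Psi x = comb3 a1 psiR a2 psiL a3 psiP x in
  let coeffR := fun (Psi : R -> C4) (a4 a5 : Cx) =>
    exists a6 : Cx, forall x, l < x -> Psi x = comb3 a4 phiR a5 phiL a6 phiM x in
  let inS := fun Psi : R -> C4 =>
    is_solution a Ut Psi /\ (exists a1 a2, coeffL Psi a1 a2) /\
    (exists a4 a5, coeffR Psi a4 a5) in
  (* S -> C^2, Psi |-> (a1,a2) is a bijection *)
  (forall a1 a2 : Cx,
     (exists Psi, inS Psi /\ coeffL Psi a1 a2) /\
     (forall Psi Psi', inS Psi -> inS Psi' -> coeffL Psi a1 a2 -> coeffL Psi' a1 a2 ->
        forall x, Psi x = Psi' x)) ->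
  (* S -> C^2, Psi |-> (a4,a5) is a bijection *)
  (forall a4 a5 : Cx,
     (exists Psi, inS Psi /\ coeffR Psi a4 a5) /\
     (forall Psi Psi', inS Psi -> inS Psi' -> coeffR Psi a4 a5 -> coeffR Psi' a4 a5 ->
        forall x, Psi x = Psi' x)) ->
  let isAnp := fun M : Mat2 =>
    forall (Psi : R -> C4) (a1 a2 a4 a5 : Cx),
      inS Psi -> coeffL Psi a1 a2 -> coeffR Psi a4 a5 ->
      a1 = Cadd (Cmul (m11 M) a4) (Cmul (m12 M) a5) /\
      a2 = Cadd (Cmul (m21 M) a4) (Cmul (m22 M) a5) in
  (exists M, isAnp M) /\
  (forall M, isAnp M -> Mat2_det M = RtoC (kU * (E - U0) / (k * E))).
Proof.
 intros Hm Hh HE HEU Hl Hpc HU0 HUl Hth kappa a k lam KU2 HKa kU lamU Ut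
   Hwp0 Hwp Hwm0 Hwm vR vL vR' vL' psiR psiL psiP phiR phiL phiM coeffL coeffR inS
   HbijL HbijR isAnp.
 assert (Hkap : 0 < kappa) by (unfold kappa; apply Rdiv_lt_0_compat; auto; apply sqrt_lt_R0; nra).
 assert (Hkap2 : kappa ^ 2 = 2 * m * E / hbar ^ 2).
 { unfold kappa. unfold Rdiv. rewrite Rpow_mult_distr, pow2_sqrt by nra. rewrite pow_inv. ring. }
 assert (Hcos : 0 < cos theta) by (apply cos_gt_0; lra).
 assert (Hk : 0 < k) by (unfold k; nra).
 assert (Hak : a ^ 2 + k ^ 2 = kappa ^ 2).
 { unfold a, k. pose proof (sin2_cos2 theta) as S. unfold Rsqr in S. 
   transitivity (kappa^2 * (sin theta * sin theta + cos theta * cos theta)); [ring|rewrite S; ring]. }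
 assert (Hlam : 0 < lam) by (unfold lam; apply sqrt_lt_R0; nra).
 assert (HkU2 : kU ^ 2 = KU2 - a ^ 2) by (unfold kU; apply pow2_sqrt; lra).
 assert (HkU : 0 < kU) by (unfold kU; apply sqrt_lt_R0; lra).
 assert (HlamU : 0 < lamU) by (unfold lamU; apply sqrt_lt_R0; nra).
 assert (EvR : Amul a (- kappa ^ 2) vR = C4scale (0, k) vR).
 { unfold vR, Amul, C4scale, Cmul, Cadd, RtoC; simpl; f_equal; f_equal; nra. }
 assert (EvL : Amul a (- kappa ^ 2) vL = C4scale (0, - k) vL).
 { unfold vL, vR, C4conj, Cconj, Amul, C4scale, Cmul, Cadd, RtoC; simpl; f_equal; f_equal; nra. }
 assert (EvR' : Amul a KU2 vR' = C4scale (0, kU) vR').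
 { unfold vR', Amul, C4scale, Cmul, Cadd, RtoC; simpl; f_equal; f_equal; nra. }
 assert (EvL' : Amul a KU2 vL' = C4scale (0, - kU) vL').
 { unfold vL', vR', C4conj, Cconj, Amul, C4scale, Cmul, Cadd, RtoC; simpl; f_equal; f_equal; nra. }
 assert (O1 : Bc vR w_plus = (0,0)).
 { eapply Bc_eig; [exact EvR | exact Hwp |]. unfold Cadd, RtoC; simpl. intro X; injection X; lra. }
 assert (O2 : Bc vL w_plus = (0,0)).
 { eapply Bc_eig; [exact EvL | exact Hwp |]. unfold Cadd, RtoC; simpl. intro X; injection X; lra. }
 assert (O3 : Bc vR' w_minus = (0,0)).
 { eapply Bc_eig; [exact EvR' | exact Hwm |]. unfold Cadd, RtoC; simpl. intro X; injection X; lra. }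
 assert (O4 : Bc vL' w_minus = (0,0)).
 { eapply Bc_eig; [exact EvL' | exact Hwm |]. unfold Cadd, RtoC; simpl. intro X; injection X; lra. }
 assert (BLv : Bc vR vL = (0, - 4 * k * kappa ^ 2)).
 { unfold vL, vR, C4conj, Cconj, Bc, Csub, Cmul, RtoC; simpl; f_equal; ring. }
 assert (BRv : Bc vR' vL' = (0, 4 * kU * KU2)).
 { unfold vL', vR', C4conj, Cconj, Bc, Csub, Cmul, RtoC; simpl; f_equal; ring. }
 set (BL := (0, - 4 * k * kappa ^ 2)) in *.
 set (BR := (0, 4 * kU * KU2)) in *.
 assert (HBL : BL <> (0,0)) by (unfold BL; intro X; injection X; intros; assert (0 < k * kappa ^ 2) by (apply Rmult_lt_0_compat; [lra|apply pow_lt; lra]); lra).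
 assert (HBR : BR <> (0,0)) by (unfold BR; intro X; injection X; intros; assert (0 < kU * KU2) by (apply Rmult_lt_0_compat; nra); lra).
 assert (EvalL : forall Psi Phi a1 a2 b1 b2, coeffL Psi a1 a2 -> coeffL Phi b1 b2 ->
   Bc (Psi (-1)) (Phi (-1)) = Cmul (Csub (Cmul a1 b2) (Cmul a2 b1)) BL).
 { intros Psi Phi a1 a2 b1 b2 [a3 H1] [b3 H2].
   rewrite H1, H2 by lra. unfold comb3. rewrite Bc_comb.
   - unfold psiR, psiL. rewrite Bc_scalel, Bc_scaler, BLv. f_equal.
     apply Cexp_pair. ring.
   - unfold psiR, psiP. rewrite Bc_scalel, Bc_scaler, O1.
     unfold Cmul; simpl; f_equal; ring.
   - unfold psiL, psiP. rewrite Bc_scalel, Bc_scaler, O2.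
     unfold Cmul; simpl; f_equal; ring. }
 assert (EvalR : forall Psi Phi a1 a2 b1 b2, coeffR Psi a1 a2 -> coeffR Phi b1 b2 ->
   Bc (Psi (l+1)) (Phi (l+1)) = Cmul (Csub (Cmul a1 b2) (Cmul a2 b1)) BR).
 { intros Psi Phi a1 a2 b1 b2 [a3 H1] [b3 H2].
   rewrite H1, H2 by lra. unfold comb3. rewrite Bc_comb.
   - unfold phiR, phiL. rewrite Bc_scalel, Bc_scaler, BRv. f_equal.
     apply Cexp_pair. ring.
   - unfold phiR, phiM. rewrite Bc_scalel, Bc_scaler, O3.
     unfold Cmul; simpl; f_equal; ring.
   - unfold phiL, phiM. rewrite Bc_scalel, Bc_scaler, O4.
     unfold Cmul; simpl; f_equal; ring. }
 assert (HUt : forall x, continuity_pt U x -> continuity_pt Ut x).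
 { intros x Hx. unfold Ut.
   apply (continuity_pt_mult (fun _ => 2 * m / hbar ^ 2) (fun x => U x - E)).
   apply continuity_pt_const; intros ? ?; reflexivity.
   apply (continuity_pt_minus U (fun _ => E)); auto.
   apply continuity_pt_const; intros ? ?; reflexivity. }
 assert (KEY : forall Psi Phi a1 a2 b1 b2 a4 a5 b4 b5, inS Psi -> inS Phi ->
   coeffL Psi a1 a2 -> coeffL Phi b1 b2 -> coeffR Psi a4 a5 -> coeffR Phi b4 b5 ->
   Cmul (Csub (Cmul a1 b2) (Cmul a2 b1)) BL = Cmul (Csub (Cmul a4 b5) (Cmul a5 b4)) BR).
 { intros Psi Phi a1 a2 b1 b2 a4 a5 b4 b5 [S1 _] [S2 _] L1 L2 R1 R2.
   rewrite <- (EvalL Psi Phi a1 a2 b1 b2 L1 L2), <- (EvalR Psi Phi a4 a5 b4 b5 R1 R2).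
   apply (conserve a U Ut); auto. lra. }
 destruct (HbijR (1,0) (0,0)) as [[Psi1 [S1 R1]] _].
 destruct (HbijR (0,0) (1,0)) as [[Psi2 [S2 R2]] _].
 destruct S1 as [S1a [[c1 [c2 L1]] S1c]].
 destruct S2 as [S2a [[d1 [d2 L2]] S2c]].
 assert (S1 : inS Psi1) by (split; [auto | split; eauto]).
 assert (S2 : inS Psi2) by (split; [auto | split; eauto]).
 pose proof (KEY Psi1 Psi2 _ _ _ _ _ _ _ _ S1 S2 L1 L2 R1 R2) as K12.
 split.
 - exists (mkMat2 c1 d1 c2 d2). intros Psi a1 a2 a4 a5 S L R. simpl.
   apply (H2.solve2 BL BR); auto.
   + exact (KEY Psi Psi1 _ _ _ _ _ _ _ _ S S1 L L1 R R1).
   + exact (KEY Psi Psi2 _ _ _ _ _ _ _ _ S S2 L L2 R R2).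
 - intros M HM.
   destruct (HM Psi1 c1 c2 (1,0) (0,0) S1 L1 R1) as [E11 E21].
   destruct (HM Psi2 d1 d2 (0,0) (1,0) S2 L2 R2) as [E12 E22].
   assert (Hdet : Mat2_det M = Csub (Cmul c1 d2) (Cmul c2 d1)).
   { rewrite E11, E21, E12, E22. destruct M as [[] [] [] []]; dCx c1; unfold Mat2_det; simpl.
     unfold Csub, Cmul, Cadd; simpl; f_equal; ring. }
   rewrite Hdet. apply (H2.cancel_r _ _ BL); auto.
   rewrite K12. unfold BR, BL, RtoC, Cmul, Csub; simpl. f_equal; [ring|].
   assert (Hk2 : kappa * (kappa * 1) = 2 * m * E / hbar ^ 2) by (rewrite <- Hkap2; ring).
   rewrite Hk2. unfold KU2. field. split; lra.
Qed.
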